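(* Let $w$ be a perfectly clustering Lyndon word over a totally ordered alphabet, with a palindromic special factorization $w=a_1\pi_1a_2\pi_2\cdots\pi_{k-1}a_k$. Then for every $i\in\{1,\dots,k\}$, the word $$a_i\pi_ia_{i+1}\cdots\pi_{k-1}a_k\,a_1\pi_1a_2\cdots a_{i-1}\pi_{i-1}$$ is the lexicographically smallest conjugate of $w$ beginning with the letter $a_i$.
   Context: A special factorization of $w$ is a factorization $w=a_1\pi_1a_2\cdots\pi_{k-1}a_k$ where the set of letters occurring in $w$ is $\{a_1<\cdots<a_k\}$ and $\pi_1,\dots,\pi_{k-1}$ are words; it is palindromic if every $\pi_i$ is a palindrome. Conjugates of $w$ are the words $yx$ where $w=xy$. Lexicographic order: a proper prefix is smaller. A Lyndon word is a primitive word strictly smaller than its other conjugates. For a primitive word $v$ of length $n$ with conjugates $v_1<\cdots<v_n$, $\mathrm{bw}(v)$ is the word formed by the last letters of $v_1,\dots,v_n$; $v$ is perfectly clustering if $\mathrm{bw}(v)$ is weakly decreasing. *)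

(* Defs.v *)
From HB Require Import structures.
From mathcomp Require Import all_boot all_order.
Set Implicit Arguments. Unset Strict Implicit. Unset Printing Implicit Defensive.
Import Order.TTheory.

Section Words.
Context {d : Order.disp_t} {T : orderType d}.

Fixpoint lex_le (s t : seq T) : bool :=
  match s, t with
  | [::], _ => true
  | _ :: _, [::] => false
  | x :: s', y :: t' => (x < y)%O || ((x == y) && lex_le s' t')
  end.

Definition lex_lt (s t : seq T) : bool := lex_le s t && (s != t).

Definition conjugate (v w : seq T) : Prop :=
  exists x y, w = x ++ y /\ v = y ++ x.

Definition primitive (w : seq T) : Prop :=
  ~ exists (u : seq T) (k : nat), 2 <= k /\ w = flatten (nseq k u).

Definition lyndon (w : seq T) : Prop :=
  primitive w /\ forall v, conjugate v w -> v != w -> lex_lt w v.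

Definition bw (v : seq T) : seq T :=
  match v with
  | [::] => [::]
  | x :: _ => map (last x) (sort lex_le (mkseq (fun i => rot i v) (size v)))
  end.

Definition perfectly_clustering (v : seq T) : Prop :=
  primitive v /\ sorted (fun x y => (y <= x)%O) (bw v).

(* blocks [a_1 pi_1; a_2 pi_2; ...; a_k] (pi_k := empty word) *)
Definition sf_blocks (a : seq T) (pi : seq (seq T)) : seq (seq T) :=
  [seq p.1 :: p.2 | p <- zip a (rcons pi [::])].

Definition special_factorization (w : seq T) (a : seq T) (pi : seq (seq T))
  : Prop :=
  [/\ sorted (fun x y => (x < y)%O) a,
      (forall x, (x \in w) = (x \in a)),
      size pi = (size a).-1 &
      w = flatten (sf_blocks a pi)].

Definition palindromic_special_factorization w a pi : Prop :=
  special_factorization w a pi /\ all (fun p => rev p == p) pi.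

End Words.

(* Main.v *)
Require Import Defs.
From HB Require Import structures.
From mathcomp Require Import all_boot all_order.
From mathcomp Require Import zify.
Set Implicit Arguments. Unset Strict Implicit. Unset Printing Implicit Defensive.
Import Order.TTheory.

Section Lex.
Context {d : Order.disp_t} {T : orderType d}.
Implicit Types s t u : seq T.

Lemma lex_le_refl s : lex_le s s.
Proof. by elim: s => //= x s ->; rewrite eqxx ltxx. Qed.

Lemma lex_le_trans s t u : lex_le s t -> lex_le t u -> lex_le s u.
Proof.
elim: s t u => [//|x s IH] [//|y t] [//|z u] /=.
case/orP=> [xy|/andP[/eqP <- st]]; case/orP=> [yz|/andP[/eqP <- tu]].
- by rewrite (lt_trans xy yz).
- by rewrite xy.
- by rewrite yz.
- by rewrite eqxx (IH _ _ st tu) orbT.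
Qed.

Lemma lex_le_transitive : transitive (@lex_le d T).
Proof. by move=> b a c; apply: lex_le_trans. Qed.

Lemma lex_le_total s t : lex_le s t || lex_le t s.
Proof.
elim: s t => [//|x s IH] [|y t] //=.
case: (ltgtP x y) => //= ->; by rewrite eqxx IH.
Qed.

Lemma lex_le_anti s t : lex_le s t -> lex_le t s -> s = t.
Proof.
elim: s t => [|x s IH] [|y t] //=.
case: (ltgtP x y) => //= -> ; rewrite ?eqxx /= => h1 h2; by rewrite (IH _ h1 h2).
Qed.

Lemma lex_le_cat s t u v : size s = size t ->
  lex_le (s ++ u) (t ++ v) = (lex_le s t && (s != t)) || ((s == t) && lex_le u v).
Proof.
elim: s t => [|x s IH] [|y t] //= [] /IH ->.
rewrite eqseq_cons.
by case: (ltgtP x y).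
Qed.

Lemma lex_lt_cons x s t : lex_lt (x :: s) (x :: t) = lex_lt s t.
Proof. by rewrite /lex_lt /= ltxx eqxx eqseq_cons eqxx. Qed.

Lemma lex_le_sandwich m s t u :
  lex_le s t -> lex_le t u -> take m s = take m u -> take m t = take m s.
Proof.
elim: m s t u => [|m IH] s t u; first by rewrite !take0.
case: s => [|x s]; case: t => [|y t]; case: u => [|z u] //=.
case/orP=> [xy|/andP[/eqP <- st]]; case/orP=> [yx|/andP[/eqP E tu]]; case=> E' Esu; subst.
- by move: (lt_trans xy yx); rewrite ltxx.
- by move: xy; rewrite ltxx.
- by move: yx; rewrite ltxx.
- by rewrite (IH _ _ _ st tu Esu).
Qed.

End Lex.

Section Main.
Context {d : Order.disp_t} {T : orderType d}.
Variables (w : seq T) (x0 : T).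
Local Notation n := (size w).
Hypothesis n_gt0 : 0 < n.

Definition W p := nth x0 w (p %% n).
Definition R p := mkseq (fun j => W (p + j)) n.

Lemma W_mod p : W (p %% n) = W p.
Proof. by rewrite /W modn_mod. Qed.

Lemma W_addn p : W (p + n) = W p.
Proof. by rewrite /W modnDr. Qed.

Lemma W_eqmod p q : p %% n = q %% n -> W p = W q.
Proof. by rewrite /W => ->. Qed.

Lemma R_mod p : R (p %% n) = R p.
Proof. by apply: eq_mkseq => j; apply: W_eqmod; rewrite modnDml. Qed.

Lemma R_eqmod p q : p %% n = q %% n -> R p = R q.
Proof. by move=> E; rewrite -R_mod E R_mod. Qed.

Lemma size_R p : size (R p) = n.
Proof. by rewrite size_mkseq. Qed.

Lemma nth_R p j : j < n -> nth x0 (R p) j = W (p + j).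
Proof. by move=> h; rewrite nth_mkseq. Qed.

Lemma R_cons p : R p = W p :: mkseq (fun j => W (p.+1 + j)) n.-1.
Proof.
apply: (@eq_from_nth _ x0); first by rewrite /= !size_mkseq prednK.
rewrite size_R => -[|j] hj; first by rewrite nth_R // addn0.
by rewrite /= nth_mkseq ?nth_R // ?addSnnS // -ltnS prednK.
Qed.

Lemma R_rcons p : R p.+1 = rcons (mkseq (fun j => W (p.+1 + j)) n.-1) (W p).
Proof.
apply: (@eq_from_nth _ x0); first by rewrite size_rcons !size_mkseq prednK.
rewrite size_R => j hj; rewrite nth_R // nth_rcons size_mkseq.
case: ltnP => h1; first by rewrite nth_mkseq.
have -> : j = n.-1 by move: hj; rewrite -{1}(prednK n_gt0) ltnS => h2; apply/eqP; rewrite eqn_leq h1 h2.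
by rewrite eqxx addSnnS prednK // W_addn.
Qed.

Lemma rot_R p : p <= n -> rot p w = R p.
Proof.
move=> hp; apply: (@eq_from_nth _ x0); first by rewrite size_rot size_R.
rewrite size_rot => j hj; rewrite nth_R // /rot nth_cat size_drop /W.
case: ltnP => h.
  by rewrite nth_drop modn_small // -ltn_subRL.
rewrite nth_take; last by lia.
have -> : p + j = (j - (n - p)) + n by lia.
by rewrite modnDr modn_small //; lia.
Qed.

Lemma R0 : R 0 = w.
Proof. by rewrite -rot_R // rot0. Qed.

Definition ltp p s := lex_lt (R p) (R s).

Lemma ltp_irr p : ltp p p = false.
Proof. by rewrite /ltp /lex_lt eqxx andbF. Qed.

Lemma ltp_trans p q s : ltp p q -> ltp q s -> ltp p s.
Proof.
rewrite /ltp /lex_lt => /andP[h1 n1] /andP[h2 n2].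
rewrite (lex_le_trans h1 h2) /=; apply/eqP => E.
by rewrite E in h1; move: n2; rewrite (lex_le_anti h2 h1) eqxx.
Qed.

Lemma ltp_asym p s : ltp p s -> ltp s p = false.
Proof. by move=> h; apply/negbTE/negP => h'; move: (ltp_trans h h'); rewrite ltp_irr. Qed.

Lemma head_ltp p s : (W p < W s)%O -> ltp p s.
Proof.
move=> h; rewrite /ltp (R_cons p) (R_cons s) /lex_lt /= h /= eqseq_cons.
by rewrite (lt_eqF h).
Qed.

Lemma LF p s : W p = W s -> ltp p.+1 s.+1 = ltp p s.
Proof.
move=> E; rewrite /ltp (R_rcons p) (R_rcons s) (R_cons p) (R_cons s) E lex_lt_cons.
set X := mkseq _ _; set Y := mkseq _ _.
have sXY : size X = size Y by rewrite !size_mkseq.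
rewrite /lex_lt -!cats1 lex_le_cat //.
have [->|ne] := eqVneq X Y; first by rewrite !eqxx /= !andbF.
by rewrite eqseq_cat // (negbTE ne) /= !andbT orbF.
Qed.


Definition Per a := forall t, W (t + a) = W t.

Lemma Per_n : Per n.
Proof. by move=> t; rewrite W_addn. Qed.

Lemma Per_mul a m : Per a -> Per (m * a).
Proof.
move=> Pa; elim: m => [|m IH] t; first by rewrite mul0n addn0.
by rewrite mulSn addnA IH Pa.
Qed.

Lemma Per_mod a b : Per a -> Per b -> Per (a %% b).
Proof.
move=> Pa Pb t; rewrite -(Per_mul (a %/ b) Pb (t + a %% b)) -addnA.
by rewrite [_ %% b + _]addnC -divn_eq Pa.
Qed.

Lemma Per_gcd a b : Per a -> Per b -> Per (gcdn a b).
Proof.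
elim/ltn_ind: a b => a IH b Pa Pb; rewrite gcdnE.
case: eqP => [_|/eqP a0]; first exact: Pb.
apply: IH; [by rewrite ltn_mod lt0n | exact: Per_mod | exact: Pa].
Qed.

Lemma size_flatten_nseq m (u : seq T) : size (flatten (nseq m u)) = m * size u.
Proof. by elim: m => //= m IH; rewrite size_cat IH mulSn. Qed.

Lemma nth_flatten_nseq m (u : seq T) i : 0 < size u -> i < m * size u ->
  nth x0 (flatten (nseq m u)) i = nth x0 u (i %% size u).
Proof.
move=> su; elim: m i => [|m IH] i //= hi; rewrite nth_cat.
case: ltnP => h; first by rewrite modn_small.
rewrite IH; last by move: hi; rewrite mulSn; lia.
by rewrite -{2}(subnK h) modnDr.
Qed.

Hypothesis prim : primitive w.

Lemma R_inj p s : p < n -> s < n -> R p = R s -> p = s.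
Proof.
wlog ps : p s / p <= s.
  move=> H hp hs E; case: (leqP p s) => h; first exact: H.
  by apply/esym/H => //; apply: ltnW.
move=> hp hs E; case: (ltngtP p s) ps => // ps _.
have WW j : j < n -> W (p + j) = W (s + j).
  by move=> hj; rewrite -!nth_R // E.
have Ps : Per (s - p).
  move=> t; pose j := (t + (n - p)) %% n.
  have hj : j < n by rewrite ltn_mod.
  have E1 : W (p + j) = W t.
    apply: W_eqmod; rewrite modnDmr.
    have -> : p + (t + (n - p)) = t + n by lia.
    by rewrite modnDr.
  have E2 : W (s + j) = W (t + (s - p)).
    apply: W_eqmod; rewrite modnDmr.
    have -> : s + (t + (n - p)) = t + (s - p) + n by lia.
    by rewrite modnDr.
  by rewrite -E2 -WW // E1.
have Pg := Per_gcd Ps Per_n.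
set g := gcdn (s - p) n in Pg.
have g0 : 0 < g by rewrite gcdn_gt0 n_gt0 orbT.
have gn : g %| n by apply: dvdn_gcdr.
have gsp : g <= s - p by apply: dvdn_leq; [lia | apply: dvdn_gcdl].
have gltn : g < n by lia.
apply: False_ind; apply: prim; exists (take g w), (n %/ g); split.
  have := divnK gn; case: (n %/ g) => [|[|m]] //; first by move=> h; lia.
  by rewrite mul1n => h; lia.
have sz : size (take g w) = g by rewrite size_take gltn.
apply: (@eq_from_nth _ x0); first by rewrite size_flatten_nseq sz divnK.
move=> i hi; rewrite nth_flatten_nseq ?sz //; last by rewrite ?sz divnK.
rewrite nth_take; last by rewrite ltn_mod.
have := Per_mul (i %/ g) Pg (i %% g); rewrite addnC -divn_eq /W => h.
have h2 : i %% g < n by apply: ltn_trans gltn; rewrite ltn_mod.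
by rewrite (modn_small hi) (modn_small h2) in h.
Qed.

Lemma R_eq p s : R p = R s -> p %% n = s %% n.
Proof.
by rewrite -(R_mod p) -(R_mod s) => /R_inj; apply; rewrite ltn_mod.
Qed.

Lemma ltp_total p s : p %% n != s %% n -> ltp p s || ltp s p.
Proof.
move=> ne; have nR : R p != R s by apply: contra ne => /eqP /R_eq ->.
rewrite /ltp /lex_lt nR eq_sym nR !andbT; exact: lex_le_total.
Qed.

Lemma notltp_le p s : ~~ ltp s p -> lex_le (R p) (R s).
Proof.
rewrite /ltp /lex_lt negb_and negbK => /orP[h|/eqP->]; last exact: lex_le_refl.
by case/orP: (lex_le_total (R p) (R s)) => // h'; rewrite h' in h.
Qed.

Hypothesis pcw : sorted (fun x y => (y <= x)%O) (bw w).

Lemma PC0 p s : ltp p.+1 s.+1 -> (W s <= W p)%O.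
Proof.
move=> hlt; case E: w pcw n_gt0 => [//|y w'] _ _.
have pc := pcw; rewrite /bw E -E in pc.
set srt := sort lex_le _ in pc.
have Rin q : R q \in srt.
  rewrite mem_sort -R_mod -rot_R; last by apply: ltnW; rewrite ltn_mod.
  by apply/mapP; exists (q %% n) => //; rewrite mem_iota add0n ltn_mod.
have usrt : uniq srt.
  rewrite sort_uniq.
  have inj : {in iota 0 n &, injective (fun i => rot i w)}.
    move=> i j; rewrite !mem_iota !add0n => hi hj.
    rewrite (rot_R (ltnW hi)) (rot_R (ltnW hj)); exact: R_inj.
  have := map_inj_in_uniq inj; rewrite iota_uniq; exact.
have ssrt : sorted lex_le srt by apply: sort_sorted; exact: lex_le_total.
set ip := index (R p.+1) srt; set iq := index (R s.+1) srt.
have hip : ip < size srt by rewrite index_mem.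
have his : iq < size srt by rewrite index_mem.
have lt_ip : ip <= iq.
  rewrite leqNgt; apply/negP => h.
  have := sorted_leq_nth (leT:=lex_le) (@lex_le_transitive _ _) (@lex_le_refl _ _) [::] ssrt iq ip his hip (ltnW h).
  rewrite !nth_index // => h2; move: hlt; rewrite /ltp /lex_lt => /andP[h1 ne].
  by move: ne; rewrite (lex_le_anti h1 h2) eqxx.
have tr : transitive (fun x y : T => (y <= x)%O).
  by move=> a b c h1 h2; apply: le_trans h2 h1.
have := sorted_leq_nth tr (fun x => lexx x) y pc; rewrite size_map => /(_ ip iq hip his lt_ip).
rewrite !(nth_map [::]) // !nth_index //.
by rewrite !R_rcons !last_rcons.
Qed.

Lemma PC p s : (W p < W s)%O -> ltp s.+1 p.+1.
Proof.
move=> h; have ne : p.+1 %% n != s.+1 %% n.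
  apply: contraTneq h => E.
  have -> : W p = W s.
    have : R p.+1 = R s.+1 by apply: R_eqmod.
    by rewrite !R_rcons => /eqP; rewrite eqseq_rcons => /andP[_ /eqP].
  by rewrite ltxx.
case/orP: (ltp_total ne) => // /PC0 h'.
by move: (lt_le_trans h h'); rewrite ltxx.
Qed.


Lemma ltp_mod p s : ltp (p %% n) s = ltp p s.
Proof. by rewrite /ltp R_mod. Qed.

Lemma ltp_modr p s : ltp p (s %% n) = ltp p s.
Proof. by rewrite /ltp R_mod. Qed.

Definition rank p := \sum_(s < n) (ltp s p : nat).
Definition Lc c := \sum_(s < n) ((W s < c)%O : nat).
Definition Nc c := \sum_(s < n) ((W s == c) : nat).
Definition Gc c := \sum_(s < n) ((c < W s)%O : nat).
Definition Ec p := \sum_(s < n) (((W s == W p) && ltp s p) : nat).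

Lemma LNG c : Lc c + Nc c + Gc c = n.
Proof.
rewrite /Lc /Nc /Gc -!big_split /=.
rewrite (eq_bigr (fun _ => 1)) ?sum_nat_const ?card_ord ?muln1 // => s _.
by case: (ltgtP (W s) c).
Qed.

Lemma rank_F p : rank p = Lc (W p) + Ec p.
Proof.
rewrite /rank /Lc /Ec -big_split; apply: eq_bigr => s _ /=.
case: (ltgtP (W s) (W p)) => h /=.
- by rewrite head_ltp.
- by rewrite ltp_asym // head_ltp.
- by [].
Qed.

Lemma sum_shift (f : nat -> nat) : (forall s, f (s + n) = f s) ->
  \sum_(s < n) f s = \sum_(s < n) f s.+1.
Proof.
move=> hf; case E: n n_gt0 => [//|n'] _.
rewrite big_ord_recl big_ord_recr /= addnC; congr (_ + _).
by rewrite -E -(hf 0).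
Qed.

Lemma rank_L p : rank p.+1 = Gc (W p) + Ec p.
Proof.
rewrite /rank (@sum_shift (fun s => ltp s p.+1)); last first.
  by move=> s; rewrite -ltp_mod modnDr ltp_mod.
rewrite /Gc /Ec -big_split; apply: eq_bigr => s _ /=.
case: (ltgtP (W s) (W p)) => h /=.
- by rewrite ltp_asym // PC.
- by rewrite PC.
- by rewrite LF.
Qed.

Lemma Ec_lt p : Ec p < Nc (W p).
Proof.
have hp : p %% n < n by rewrite ltn_mod.
rewrite /Ec /Nc [X in X < _](bigD1 (Ordinal hp)) //= [X in _ < X](bigD1 (Ordinal hp)) //=.
rewrite W_mod eqxx ltp_mod ltp_irr add0n add1n ltnS.
by apply: leq_sum => s _; case: (W s == W p); case: (ltp s p).
Qed.

Lemma rank_step p : rank p.+1 + Lc (W p) = rank p + Gc (W p).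
Proof. by rewrite rank_L (rank_F p); lia. Qed.

Lemma rank_Fb p : Lc (W p) <= rank p < Lc (W p) + Nc (W p).
Proof. by rewrite rank_F leq_addr ltn_add2l Ec_lt. Qed.

Lemma rank_Lb p : Gc (W p) <= rank p.+1 < Gc (W p) + Nc (W p).
Proof. by rewrite rank_L leq_addr ltn_add2l Ec_lt. Qed.

Lemma rank_lt_n p : rank p < n.
Proof. by have := rank_Fb p; have := LNG (W p); lia. Qed.

Lemma rank_mod p : rank (p %% n) = rank p.
Proof. by apply: eq_bigr => s _; rewrite ltp_modr. Qed.

Lemma ltp_rank p s : ltp s p -> rank s < rank p.
Proof.
move=> h; have hs : s %% n < n by rewrite ltn_mod.
rewrite /rank [X in X < _](bigD1 (Ordinal hs)) //= [X in _ < X](bigD1 (Ordinal hs)) //=.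
rewrite !ltp_mod ltp_irr h add0n add1n ltnS.
apply: leq_sum => t _; case E: (ltp t s) => //=.
by rewrite (ltp_trans E h).
Qed.

Lemma rank_inj p s : rank p = rank s -> p %% n = s %% n.
Proof.
move=> E; apply/eqP; apply: contraT => ne.
by case/orP: (ltp_total ne) => /ltp_rank; rewrite E ltnn.
Qed.

Lemma rank_le p s : rank s <= rank p -> lex_le (R s) (R p).
Proof.
move=> h; apply: notltp_le; apply/negP => /ltp_rank; rewrite ltnNge h.
by [].
Qed.

Lemma blocks_F c c' : (c < c')%O -> Lc c + Nc c <= Lc c'.
Proof.
move=> cc; rewrite /Lc /Nc -big_split; apply: leq_sum => s _ /=.
case: (ltgtP (W s) c) => h //=.
- by rewrite (lt_trans h cc).
- by rewrite h cc.
Qed.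

Lemma blocks_L c c' : (c < c')%O -> Gc c' + Nc c' <= Gc c.
Proof.
move=> cc; rewrite /Gc /Nc -big_split; apply: leq_sum => s _ /=.
case: (ltgtP (W s) c') => h //=.
- by rewrite (lt_trans cc h).
- by rewrite h cc.
Qed.

Lemma sameF c c' t : Lc c <= t < Lc c + Nc c -> Lc c' <= t < Lc c' + Nc c' -> c = c'.
Proof.
move=> h1 h2; case: (ltgtP c c') => // cc.
- by have := blocks_F cc; lia.
- by have := blocks_F cc; lia.
Qed.

Lemma sameL c c' t : Gc c <= t < Gc c + Nc c -> Gc c' <= t < Gc c' + Nc c' -> c = c'.
Proof.
move=> h1 h2; case: (ltgtP c c') => // cc.
- by have := blocks_L cc; lia.
- by have := blocks_L cc; lia.
Qed.

Lemma cover_iota (s : seq nat) m : uniq s -> (forall x, x \in s -> x < m) ->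
  m <= size s -> forall t, t < m -> t \in s.
Proof.
move=> us sub sz t tm; apply: contraT => nt.
have sub' : {subset s <= rem t (iota 0 m)}.
  move=> x xs; rewrite (mem_rem_uniq _ (iota_uniq 0 m)) inE mem_iota add0n (sub x xs) leq0n !andbT.
  by apply/eqP => E; move: nt; rewrite -E xs.
have := uniq_leq_size us sub'; rewrite size_rem ?mem_iota ?add0n // size_iota.
move=> h; have := leq_trans sz h; case: (m) tm => // m' _ /=.
by rewrite ltnn.
Qed.

Lemma rank_surj t : t < n -> exists2 p, p < n & rank p = t.
Proof.
move=> tn.
have inj : {in iota 0 n &, injective rank}.
  move=> p s; rewrite !mem_iota !add0n => hp hs /rank_inj.
  by rewrite !modn_small.
have := @cover_iota (map rank (iota 0 n)) n.
rewrite map_inj_in_uniq // iota_uniq size_map size_iota => /(_ isT).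
case/(_ _ (leqnn n) t tn)/Wrap => [x /mapP[p _ ->]|]; first exact: rank_lt_n.
by case/mapP => p; rewrite mem_iota add0n => hp ->; exists p.
Qed.

Hypothesis lyn : forall v, conjugate v w -> v != w -> lex_lt w v.

Lemma rank0 : rank 0 = 0.
Proof.
apply: big1 => [[s hs]] _ /=.
case: (eqVneq s 0) => [->|ns]; first by rewrite ltp_irr.
have : ltp 0 s.
  rewrite /ltp R0; apply: lyn.
    by exists (take s w), (drop s w); rewrite cat_take_drop -rot_R // ltnW.
  by apply/eqP => /esym; rewrite -R0 => /R_inj; move=> /(_ n_gt0 hs) E; move: ns; rewrite -E eqxx.
by move=> /ltp_asym ->.
Qed.

Lemma Lc_W0 : Lc (W 0) = 0.
Proof. by have := rank_Fb 0; rewrite rank0; lia. Qed.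


Lemma reflection : exists e, forall m q, (q + m) %% n = e %% n -> W q = W m.
Proof.
have N0 : 0 < Nc (W 0) by have := rank_Fb 0; rewrite rank0 Lc_W0.
have Nn : Nc (W 0) <= n by have := LNG (W 0); lia.
have hlt : (Nc (W 0)).-1 < n by rewrite prednK.
have [e _ he] := @rank_surj (Nc (W 0)).-1 hlt.
exists e.
suff H : forall m q, (q + m) %% n = e %% n ->
  W q = W m /\ rank q + rank m + 1 = 2 * Lc (W m) + Nc (W m).
  by move=> m q /H[].
elim=> [|m IH] q.
  rewrite addn0 => E.
  have We : W e = W 0.
    apply: (@sameF _ _ (rank e)); first exact: rank_Fb.
    by rewrite Lc_W0 he; lia.
  rewrite (W_eqmod E) We rank0 Lc_W0 -rank_mod E rank_mod he; split => //.
  by lia.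
rewrite -addSnnS => /IH [Wq Rq].
have s1 := rank_step m.
have s2 := rank_step q.
have l1 := LNG (W m); have l2 := LNG (W m.+1).
have b1 := rank_Fb m.+1.
have b2 := rank_Lb q.
have e1 : rank q.+1 = n - 1 - rank m.+1 by lia.
have Wq' : W q = W m.+1.
  apply: (@sameL _ _ (rank q.+1)) => //.
  by rewrite e1; lia.
rewrite Wq' in s2 b2; split => //.
by lia.
Qed.


Lemma LF_le p s : W p = W s -> lex_le (R p) (R s) -> lex_le (R p.+1) (R s.+1).
Proof.
move=> E h; have [eqR|neR] := eqVneq (R p) (R s).
  have : p.+1 %% n = s.+1 %% n.
    by rewrite -addn1 -(addn1 s) -modnDml (R_eq eqR) modnDml.
  by move/R_eqmod => ->; exact: lex_le_refl.
have : ltp p s by rewrite /ltp /lex_lt h neR.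
by rewrite -LF // /ltp /lex_lt => /andP[].
Qed.

Lemma take_R p m : m <= n -> take m (R p) = mkseq (fun t => W (p + t)) m.
Proof.
move=> hm; apply: (@eq_from_nth _ x0); first by rewrite size_takel ?size_R // size_mkseq.
rewrite size_takel ?size_R // => t ht.
by rewrite nth_take // nth_R ?nth_mkseq //; apply: leq_trans hm.
Qed.

Lemma shift p s m : ltp p s -> (forall t, t < m -> W (p + t) = W (s + t)) ->
  ltp (p + m) (s + m).
Proof.
elim: m => [|m IH] h hW; first by rewrite !addn0.
rewrite !addnS LF ?IH // => [t ht|]; first by apply: hW; apply: ltnW.
by apply: hW.
Qed.

Definition isx p := rank p == Lc (W p).

Lemma isx_mod p : isx (p %% n) = isx p.
Proof. by rewrite /isx rank_mod W_mod. Qed.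

Lemma isx_eqmod p q : p %% n = q %% n -> isx p = isx q.
Proof. by move=> E; rewrite -isx_mod E isx_mod. Qed.

Lemma nonx q p : ltp q p -> W q = W p -> ~~ isx p.
Proof.
move=> h E; rewrite /isx -E; apply/eqP => E2.
by have := ltp_rank h; have := rank_Fb q; rewrite E2; lia.
Qed.

Lemma isx_uniq p q : isx p -> isx q -> W p = W q -> p %% n = q %% n.
Proof. by rewrite /isx => /eqP E1 /eqP E2 E; apply: rank_inj; rewrite E1 E2 E. Qed.

Variables (a : seq T) (pi : seq (seq T)).
Hypothesis sa : sorted (fun x y => (x < y)%O) a.
Hypothesis spi : size pi = (size a).-1.
Hypothesis wf : w = flatten (sf_blocks a pi).
Hypothesis pal : all (fun p => rev p == p) pi.

Local Notation k := (size a).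
Local Notation bl := (sf_blocks a pi).
Local Notation sh := (shape (sf_blocks a pi)).

Definition L j := size (nth [::] pi j).
Definition P j := sumn (take j sh).

Lemma size_bl : size bl = k.
Proof.
rewrite /sf_blocks size_map size_zip size_rcons spi.
by case: (size a) => //= m; rewrite minnn.
Qed.

Lemma k_gt0 : 0 < k.
Proof. by move: n_gt0; rewrite wf; case: (size a) size_bl => //; case: (sf_blocks a pi). Qed.

Lemma nth_bl j : j < k -> nth [::] bl j = nth x0 a j :: nth [::] pi j.
Proof.
move=> hj; rewrite /sf_blocks (nth_map (x0, [::])); last by rewrite size_zip size_rcons spi prednK ?minnn // k_gt0.
rewrite nth_zip /=; last by rewrite size_rcons spi prednK // k_gt0.
rewrite nth_rcons; case: ltnP => // h; case: eqP => _.
all: by rewrite (nth_default _ h).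
Qed.

Lemma nth_sh j : j < k -> nth 0 sh j = (L j).+1.
Proof. by move=> hj; rewrite /shape (nth_map [::]) ?size_bl // nth_bl. Qed.

Lemma n_sh : n = sumn sh.
Proof. by rewrite {1}wf size_flatten. Qed.

Lemma W_P j c : j < k -> c <= L j -> W (P j + c) = nth x0 (nth [::] bl j) c.
Proof.
move=> hj hc; have hc' : c < nth 0 sh j by rewrite nth_sh.
have hlt := flatten_indexP hc'.
rewrite /W modn_small; last by rewrite n_sh.
have -> : P j + c = flatten_index sh j c by [].
rewrite {1}wf nth_flatten flatten_indexKl // flatten_indexKr //.
Qed.

Lemma P_lt j : j < k -> P j + L j < n.
Proof.
move=> hj; have hc' : L j < nth 0 sh j by rewrite nth_sh.
by rewrite n_sh; apply: (flatten_indexP hc').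
Qed.

Lemma W_Pa j : j < k -> W (P j) = nth x0 a j.
Proof. by move=> hj; rewrite -(addn0 (P j)) W_P // nth_bl. Qed.

Lemma W_Ppi j m : j < k -> m < L j -> W (P j + m.+1) = nth x0 (nth [::] pi j) m.
Proof. by move=> hj hm; rewrite W_P // nth_bl. Qed.

Lemma P_S j : j < k -> P j.+1 = P j + (L j).+1.
Proof.
move=> hj; rewrite /P (take_nth 0) ?sumn_rcons ?nth_sh //.
by rewrite /shape size_map size_bl.
Qed.

Lemma P0 : P 0 = 0.
Proof. by rewrite /P take0. Qed.

Lemma pal_nth j m : m < L j ->
  nth x0 (nth [::] pi j) m = nth x0 (nth [::] pi j) (L j - m.+1).
Proof.
move=> hm; case: (ltnP j (size pi)) => hj; last by move: hm; rewrite /L nth_default.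
have := (all_nthP [::] pal) j hj => /eqP E.
by rewrite -{1}E nth_rev.
Qed.

Lemma L_pos j : 0 < L j -> j.+1 < k.
Proof.
rewrite /L; case: (ltnP j (size pi)) => hj; last by rewrite nth_default.
by move=> _; move: hj; rewrite spi; case: (size a) => //= m; rewrite ltnS.
Qed.

Lemma a_lt j j' : j < j' -> j' < k -> (nth x0 a j < nth x0 a j')%O.
Proof.
move=> h1 h2; apply: (sorted_ltn_nth (@Order.POrderTheory.lt_trans _ _) x0 sa) => //.
by rewrite inE (ltn_trans h1 h2).
Qed.

Lemma a_inj j j' : j < k -> j' < k -> nth x0 a j = nth x0 a j' -> j = j'.
Proof.
move=> h1 h2 E; case: (ltngtP j j') => // h.
- by have := a_lt h h2; rewrite E ltxx.
- by have := a_lt h h1; rewrite E ltxx.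
Qed.

Definition xp j := find (fun p => rank p == Lc (nth x0 a j)) (iota 0 n).

Lemma xp_spec j : j < k -> xp j < n /\ rank (xp j) = Lc (nth x0 a j).
Proof.
move=> hj.
have hb := rank_Fb (P j); rewrite W_Pa // in hb.
have := LNG (nth x0 a j) => hL.
have [p hp hr] := @rank_surj (Lc (nth x0 a j)) ltac:(lia).
have hh : has (fun p => rank p == Lc (nth x0 a j)) (iota 0 n).
  by apply/hasP; exists p; rewrite ?mem_iota ?add0n ?hr.
have := nth_find 0 hh; rewrite has_find size_iota in hh.
by rewrite nth_iota // add0n => /eqP.
Qed.

Lemma W_xp j : j < k -> W (xp j) = nth x0 a j.
Proof.
move=> hj; have [_ hr] := xp_spec hj.
have hb := rank_Fb (P j); rewrite W_Pa // in hb.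
apply: (@sameF _ _ (rank (xp j))); first exact: rank_Fb.
by rewrite hr; lia.
Qed.

Lemma isx_xp j : j < k -> isx (xp j).
Proof. by move=> hj; have [_ hr] := xp_spec hj; rewrite /isx hr W_xp. Qed.

Lemma xp_min j p : j < k -> W p = nth x0 a j -> lex_le (R (xp j)) (R p).
Proof.
move=> hj E; apply: rank_le; have [_ ->] := xp_spec hj.
by rewrite -E; have := rank_Fb p; lia.
Qed.


Lemma arc j m : j < k -> m < L j -> ~~ isx (xp j + m.+1).
Proof.
move=> hj hm; have hj1 : j.+1 < k by apply: L_pos; lia.
have [e He] := reflection.
set Q := P j.+1.
have HQ : Q = P j + (L j).+1 by rewrite /Q P_S.
have Qn : Q < n by have := P_lt hj1; rewrite /Q; lia.
set q := e + (n - Q).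
have qQ : q + Q = e + n by rewrite /q; lia.
have Wq : W q = nth x0 a j.+1.
  rewrite (He Q q) ?W_Pa // qQ modnDr //.
have Wq2 t : t < L j -> W (q.+1 + t) = W ((P j).+1 + t).
  move=> ht; rewrite (He (Q - t.+1) (q.+1 + t)); last first.
    have -> : q.+1 + t + (Q - t.+1) = e + n by lia.
    by rewrite modnDr.
  have -> : Q - t.+1 = P j + (L j - t.+1).+1 by lia.
  have hlt : L j - t.+1 < L j by lia.
  rewrite (W_Ppi hj hlt) addSn -addnS (W_Ppi hj ht) (pal_nth ht).
  by congr (nth _ _ _); lia.
have [xn _] := xp_spec hj.
have h1 : ltp q.+1 (xp j).+1.
  by apply: PC; rewrite W_xp // Wq; apply: a_lt.
have h2 : lex_le (R (xp j).+1) (R (P j).+1).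
  by apply: LF_le; [rewrite W_xp ?W_Pa | apply: xp_min; rewrite ?W_Pa].
have Ln : L j <= n by have := P_lt hj; lia.
have h3 : take (L j) (R q.+1) = take (L j) (R (P j).+1).
  rewrite !take_R //; apply/eq_in_map => t0; rewrite mem_iota add0n => ht0; exact: Wq2.
have h4 := lex_le_sandwich (proj1 (andP h1)) h2 h3.
have Wx t : t < L j -> W ((xp j).+1 + t) = W (q.+1 + t).
  move=> ht; move: h4; rewrite !take_R // => /(congr1 (fun s => nth x0 s t)).
  by rewrite !nth_mkseq.
have := shift (m := m) h1 (fun t ht => esym (Wx t (ltn_trans ht hm))).
move=> h5; rewrite -addSnnS; apply: (nonx h5).
by rewrite Wx.
Qed.

Lemma noncollide j1 j2 t1 t2 : j1 < k -> j2 < k -> t1 <= L j1 -> t2 <= L j2 ->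
  (xp j1 + t1) %% n = (xp j2 + t2) %% n -> j1 = j2 /\ t1 = t2.
Proof.
wlog le12 : j1 j2 t1 t2 / t1 <= t2.
  move=> H h1 h2 h3 h4 E; case: (leqP t1 t2) => h.
    exact: H.
  by have [-> ->] := H j2 j1 t2 t1 (ltnW h) h2 h1 h4 h3 (esym E).
move=> h1 h2 h3 h4 E.
have E' : (xp j1) %% n = (xp j2 + (t2 - t1)) %% n.
  apply/eqP; rewrite -(eqn_modDr t1) -addnA subnK //; exact/eqP.
case: (ltngtP t1 t2) le12 => // [lt12|eq12] _.
  have := arc h2 (_ : (t2 - t1).-1 < L j2).
  rewrite prednK ?subn_gt0 // -(isx_eqmod E') isx_xp //.
  by move=> /(_ ltac:(lia)).
subst t2; rewrite subnn addn0 in E'.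
have [x1 _] := xp_spec h1; have [x2 _] := xp_spec h2.
rewrite !modn_small // in E'.
split => //; apply: a_inj => //; by rewrite -!W_xp // E'.
Qed.

Definition Fm q := xp (reshape_index sh q) + reshape_offset sh q.

Lemma Fm_spec q : q < n -> reshape_index sh q < k /\ reshape_offset sh q <= L (reshape_index sh q).
Proof.
move=> hq; rewrite n_sh in hq.
have h1 := reshape_indexP hq; rewrite /shape size_map size_bl in h1.
split => //; have := reshape_offsetP hq; rewrite nth_sh //.
Qed.

Lemma cover p : p < n -> exists2 q, q < n & Fm q %% n = p.
Proof.
move=> hp.
have inj : {in iota 0 n &, injective (fun q => Fm q %% n)}.
  move=> q1 q2; rewrite !mem_iota !add0n => hq1 hq2 E.
  have [r1 o1] := Fm_spec hq1; have [r2 o2] := Fm_spec hq2.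
  have [Er Eo] := noncollide r1 r2 o1 o2 E.
  by rewrite -(reshape_indexK sh q1) -(reshape_indexK sh q2) Er Eo.
have := @cover_iota (map (fun q => Fm q %% n) (iota 0 n)) n.
rewrite map_inj_in_uniq // iota_uniq size_map size_iota => /(_ isT).
case/(_ _ (leqnn n) p hp)/Wrap => [x /mapP[q _ ->]|]; first by rewrite ltn_mod.
by case/mapP => q; rewrite mem_iota add0n => hq ->; exists q.
Qed.

Lemma xp_P j : j < k -> xp j = P j.
Proof.
elim: j => [|j IH] hj.
  have [x1 r1] := xp_spec hj.
  have : xp 0 %% n = 0 %% n.
    apply: rank_inj; rewrite r1 rank0 -(W_Pa hj) P0; exact: Lc_W0.
  by rewrite P0 !modn_small.
have hj' : j < k by apply: ltnW.
have IHj := IH hj'.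
have Pn : P j.+1 < n by have := P_lt hj; lia.
have [q hq Eq] := cover Pn.
have [r o] := Fm_spec hq.
move: Eq r o; rewrite /Fm.
move: (reshape_index sh q) (reshape_offset sh q) => j' t Eq r o.
have Hs : (xp j' + t) %% n = (xp j + (L j).+1) %% n.
  by rewrite Eq IHj -P_S // modn_small.
have [x' _] := xp_spec r.
case: (posnP t) => t0.
  move: Eq; rewrite t0 addn0 modn_small // => E.
  have : nth x0 a j' = nth x0 a j.+1 by rewrite -W_xp // E W_Pa.
  by move/(a_inj r hj) => E2; move: E; rewrite E2.
exfalso.
case: (ltngtP t (L j).+1) => ht.
- have E' : xp j' %% n = (xp j + ((L j).+1 - t)) %% n.
    apply/eqP; rewrite -(eqn_modDr t) -addnA subnK ?Hs //; exact: ltnW.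
  have := arc hj' (_ : ((L j).+1 - t).-1 < L j).
  rewrite prednK ?subn_gt0 // -(isx_eqmod E') isx_xp //.
  by move=> /(_ ltac:(lia)).
- have E' : (xp j' + (t - (L j).+1)) %% n = xp j %% n.
    apply/eqP; rewrite -(eqn_modDr (L j).+1) -addnA subnK ?Hs //; exact: ltnW.
  have := arc r (_ : (t - (L j).+1).-1 < L j').
  rewrite prednK ?subn_gt0 // (isx_eqmod E') isx_xp //.
  by move=> /(_ ltac:(lia)).
- have E' : (xp j' + 0) %% n = (xp j + 0) %% n.
    by rewrite !addn0; apply/eqP; rewrite -(eqn_modDr t) Hs ht.
  have [E1 _] := noncollide r hj' (leq0n _) (leq0n _) E'.
  by move: o; rewrite E1 ht ltnn.
Qed.


Lemma P_le_n i : i < k -> P i <= n.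
Proof. by move=> hi; have := P_lt hi; lia. Qed.

Lemma u_eq i : i < k -> flatten (rot i bl) = R (P i).
Proof.
move=> hi; rewrite -rot_R ?P_le_n // wf -{2}(cat_take_drop i bl) flatten_cat.
have -> : P i = size (flatten (take i bl)) by rewrite size_flatten /shape map_take.
by rewrite rot_size_cat /rot flatten_cat.
Qed.

Lemma main_min i v : i < k -> conjugate v w -> ohead v = Some (nth x0 a i) ->
  lex_le (flatten (rot i bl)) v.
Proof.
move=> hi [x [y [Ew Ev]]] hv.
have sx : size x <= n by rewrite Ew size_cat leq_addr.
have Ev' : v = R (size x) by rewrite -rot_R // Ev Ew rot_size_cat.
rewrite u_eq // -xp_P // Ev'; apply: xp_min => //.
by move: hv; rewrite Ev' R_cons /= => -[].
Qed.

End Main.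

Theorem lemma4p6 (d : Order.disp_t) (T : orderType d) (w a : seq T)
  (pi : seq (seq T)) :
  lyndon w -> perfectly_clustering w ->
  palindromic_special_factorization w a pi ->
  forall (x0 : T) (i : nat), i < size a ->
    let u := flatten (rot i (sf_blocks a pi)) in
    [/\ conjugate u w,
        ohead u = Some (nth x0 a i) &
        forall v, conjugate v w -> ohead v = Some (nth x0 a i) -> lex_le u v].
Proof.
move=> [prim lyn] [_ pcw] [[sa _ spi wf] pal] x0 i hi u.
have n_gt0 : 0 < size w.
  case E: w => [|y w'] //; exfalso; apply: prim; exists [::], 2; split => //.
have hk : i < size (sf_blocks a pi) by rewrite size_bl.
split.
- exists (flatten (take i (sf_blocks a pi))), (flatten (drop i (sf_blocks a pi))).
  by rewrite /u -flatten_cat cat_take_drop -flatten_cat /rot.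
- by rewrite /u /rot (drop_nth [::] hk) /= (@nth_bl d T w x0 n_gt0 a pi spi wf i hi).
- move=> v hv hv'; exact: (main_min n_gt0 prim pcw lyn sa spi wf pal hi hv hv').
Qed.
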